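(* Let $f_\bullet\colon X\hookrightarrow Z$ be an injective map of sets between finite metric spaces (not necessarily non-expansive), $V=\mathrm{PH}_0(X)$, $U=\mathrm{PH}_0(Z)$, and $f_0\colon V_0\to U_0$ the induced linear map. Then $\mathcal{M}^0_f$ induces an injection $\sigma^f\colon\mathrm{Rep}\,\mathcal{B}(V)\hookrightarrow\mathrm{Rep}\,\mathcal{B}(U)$; that is, $\sum_b\mathcal{M}^0_f(a,b)=m^V(a)$ for every $a\in S^V$ and $\sum_a \mathcal{M}^0_f(a,b)\le m^U(b)$ for every $b\in S^U$, so that there is an injection matching exactly $\mathcal{M}^0_f(a,b)$ copies of $[0,a)$ to copies of $[0,b)$ for all $a,b$.
   Context: All vector spaces are over $\mathbb{Z}_2$. For a finite metric space $X$, $\mathrm{VR}_r(X)$ is the graph on $X$ with edges $[x,y]$ for $d^X(x,y)\le r$, and $\mathrm{PH}_0(X)$ is the persistence module $r\mapsto H_0(\mathrm{VR}_r(X))$ (free on connected components) with structure maps $\rho_{rs}$ induced by inclusion; $V_0$ has basis $X$ and $f_0$ sends $x$ to $f_\bullet(x)$. The barcode $\mathcal{B}(V)=(S^V,m^V)$ is the multiset of finite death values $b$ of bars $[0,b)$ (infinite bar excluded). $\mathrm{Rep}(S,m)=\{(s,\ell):s\in S, 1\le\ell\le m(s)\}$. With $\ker^+_b(U)=\ker(\rho^U_{0b})$ and $\ker^-_b(U)=\bigcup_{0\le r<b}\ker(\rho^U_{0r})$, $\mathcal{M}^0_f(a,b)=\dim\frac{f_0(\ker^+_a V)\cap \ker^+_b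 U}{f_0(\ker^-_a V)\cap\ker^+_b U+f_0(\ker^+_a V)\cap \ker^-_b U}$ for $a,b>0$. *)

(* Defs.v *)
From HB Require Import structures.
From mathcomp Require Import all_boot all_order all_algebra.
From mathcomp Require Import boolp classical_sets fsbigop reals.
Set Implicit Arguments. Unset Strict Implicit. Unset Printing Implicit Defensive.
Import Order.TTheory GRing.Theory Num.Theory.
Local Open Scope ring_scope.

(* A finite metric space on the point set 'I_n (every finite set is in
   bijection with some 'I_n), with real-valued metric d. *)
Definition is_metric (R : realType) (n : nat) (d : 'I_n -> 'I_n -> R) : Prop :=
  [/\ forall x y, 0 <= d x y,
      forall x y, (d x y = 0) <-> (x = y),
      forall x y, d x y = d y x &
      forall x y z, d x z <= d x y + d y z].

Definition vr_edge (R : realType) n (d : 'I_n -> 'I_n -> R) (r : R) : rel 'I_n :=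
  fun x y => d x y <= r.

Definition vr_conn (R : realType) n (d : 'I_n -> 'I_n -> R) (r : R) : rel 'I_n :=
  connect (vr_edge d r).

(* Structure map rho_{0r} : H_0(VR_0) = Z_2^n -> H_0(VR_r), acting on row
   vectors.  The basis vector of x is sent to (the indicator of) the connected
   component of x in VR_r; this identifies the free Z_2-space on components
   with the functions on points that are constant on components (an injective
   encoding, so kernels are those of the genuine structure map). *)
Definition rho0 (R : realType) n (d : 'I_n -> 'I_n -> R) (r : R) : 'M['F_2]_n :=
  \matrix_(i, j) (vr_conn d r i j)%:R.

Definition kerP (R : realType) n (d : 'I_n -> 'I_n -> R) (b : R) : 'M['F_2]_n :=
  kermx (rho0 d b).

(* ker^-_b = union over 0 <= r < b of ker rho_{0r}.  The union of this nested
   family is a subspace; we represent it by the row space spanned by all vectors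
   in the union (which is the union itself). *)
Definition kerM (R : realType) n (d : 'I_n -> 'I_n -> R) (b : R) : 'M['F_2]_n :=
  (\sum_(v : 'rV['F_2]_n |
        `[< exists r : R, (0 <= r < b)%R /\ (v <= kermx (rho0 d r))%MS >]) <<v>>)%MS.

Definition f0 n m (f : 'I_n -> 'I_m) : 'M['F_2]_(n, m) :=
  \matrix_(i, j) (f i == j)%:R.

(* M^0_f(a,b) = dim of
   (f0(ker^+_a V) cap ker^+_b U) / (f0(ker^-_a V) cap ker^+_b U + f0(ker^+_a V) cap ker^-_b U)
   (the denominator is a subspace of the numerator). *)
Definition Mf (R : realType) n m (dX : 'I_n -> 'I_n -> R) (dZ : 'I_m -> 'I_m -> R)
    (f : 'I_n -> 'I_m) (a b : R) : nat :=
  (\rank (kerP dX a *m f0 f :&: kerP dZ b)%MS -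
   \rank ((kerM dX a *m f0 f :&: kerP dZ b) + (kerP dX a *m f0 f :&: kerM dZ b))%MS)%N.

(* multiplicity m(b) of the bar [0,b) in the barcode of PH_0: all bars of PH_0
   are born at 0, so the number of bars dying exactly at b > 0 is
   dim ker^+_b - dim ker^-_b (the number of components merged at scale b). *)
Definition mult (R : realType) n (d : 'I_n -> 'I_n -> R) (b : R) : nat :=
  (\rank (kerP d b) - \rank (kerM d b))%N.

Definition bar_support (R : realType) n (d : 'I_n -> 'I_n -> R) : set R :=
  [set b | 0 < b /\ (0 < mult d b)%N].

Definition Rep (R : realType) n (d : 'I_n -> 'I_n -> R) : set (R * nat) :=
  [set p | p.1 \in bar_support d /\ (1 <= p.2 <= mult d p.1)%N].

(* Main.v *)
Require Import Defs.
From HB Require Import structures.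
From mathcomp Require Import all_boot all_order all_algebra.
From mathcomp Require Import boolp classical_sets fsbigop reals.
From mathcomp Require Import zify.
Import Order.TTheory GRing.Theory Num.Theory.
Set Implicit Arguments. Unset Strict Implicit. Unset Printing Implicit Defensive.
Local Open Scope ring_scope.

Section LinAlg.
Variable F : fieldType.

Lemma rank_sub_eq p1 p2 m (X : 'M[F]_(p1, m)) (Y : 'M[F]_(p2, m)) :
  (X <= Y)%MS -> (Y <= X)%MS -> \rank X = \rank Y.
Proof. by move=> h1 h2; apply: eqmx_rank; rewrite h1 h2. Qed.


Ltac atom := solve [ exact: submx_refl | exact: capmxSl | exact: capmxSr
  | apply: (submx_trans (capmxSl _ _)); atom
  | apply: (submx_trans (capmxSr _ _)); atom
  | match goal with H : is_true (?X <= ?Z)%MS |- is_true (?X <= _)%MS =>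
      apply: (submx_trans H); atom end ].
Ltac sub_tac := rewrite ?sub_capmx ?addsmx_sub;
  repeat (apply/andP; split); atom.
Ltac rsub := apply: rank_sub_eq; sub_tac.

Lemma lemL m p1 p2 p3 p4 (A : 'M[F]_(p1, m)) (A' : 'M[F]_(p2, m))
  (B : 'M[F]_(p3, m)) (B' : 'M[F]_(p4, m)) :
  (A' <= A)%MS -> (B' <= B)%MS ->
  let q := (\rank (A :&: B) - \rank (A' :&: B + A :&: B'))%N in
  q = (\rank (A :&: B + A') - \rank (A :&: B' + A'))%N /\
  q = (\rank (A :&: B + B') - \rank (A' :&: B + B'))%N.
Proof.
move=> sA sB q.
have e1 := mxrank_sum_cap (A :&: B)%MS A'.
have e1' : \rank (A :&: B :&: A')%MS = \rank (A' :&: B)%MS by rsub.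
have e2 := mxrank_sum_cap (A :&: B')%MS A'.
have e2' : \rank (A :&: B' :&: A')%MS = \rank (A' :&: B')%MS by rsub.
have e3 := mxrank_sum_cap (A' :&: B)%MS (A :&: B')%MS.
have e3' : \rank (A' :&: B :&: (A :&: B'))%MS = \rank (A' :&: B')%MS by rsub.
have e4 := mxrank_sum_cap (A :&: B)%MS B'.
have e4' : \rank (A :&: B :&: B')%MS = \rank (A :&: B')%MS by rsub.
have e5 := mxrank_sum_cap (A' :&: B)%MS B'.
have e5' : \rank (A' :&: B :&: B')%MS = \rank (A' :&: B')%MS by rsub.
have i1 : (\rank (A' :&: B + A :&: B')%MS <= \rank (A :&: B)%MS)%N.
  by apply: mxrankS; sub_tac.
have i2 : (\rank (A' :&: B')%MS <= \rank (A :&: B')%MS)%N.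
  by apply: mxrankS; sub_tac.
have i3 : (\rank (A' :&: B')%MS <= \rank (A' :&: B)%MS)%N.
  by apply: mxrankS; sub_tac.
rewrite /q; lia.
Qed.
End LinAlg.
Section Graph.
Variables (R : realType) (n : nat) (d : 'I_n -> 'I_n -> R).
Hypothesis dsym : forall x y, d x y = d y x.

Lemma edge_sym r : symmetric (vr_edge d r).
Proof. by move=> x y; rewrite /vr_edge dsym. Qed.

Lemma conn_sym r : connect_sym (vr_edge d r).
Proof. exact/sym_connect_sym/edge_sym. Qed.

Lemma rho0_factor r s : (forall x y, d x y <= r -> d x y <= s) ->
  exists E, rho0 d s = rho0 d r *m E.
Proof.
move=> hrs.
set e := vr_edge d r.
have csub : subrel (vr_conn d r) (vr_conn d s).
  apply: connect_sub => x y exy; apply: connect1; exact: hrs.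
exists (\matrix_(k, j) ((k == fingraph.root e k) && vr_conn d s k j)%:R).
apply/matrixP => i j; rewrite !mxE.
rewrite (bigD1 (fingraph.root e i)) //= big1 ?addr0.
  rewrite !mxE root_root; last exact: conn_sym.
  rewrite eqxx /= /vr_conn connect_root mul1r.
  suff -> : connect (vr_edge d s) (fingraph.root e i) j = connect (vr_edge d s) i j by []; apply/idP/idP => h.
    apply: connect_trans h; apply: csub; exact: connect_root.
  apply: connect_trans h; apply: csub; rewrite /vr_conn conn_sym; exact: connect_root.
move=> k hk; rewrite !mxE.
case ck: (vr_conn d r i k); last by rewrite mul0r.
case rk: (k == fingraph.root e k); last by rewrite mulr0.
exfalso; move/eqP: rk => rk; move: ck; rewrite /vr_conn -(root_connect (conn_sym r)) => /eqP ck.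
by move: hk; rewrite rk -ck eqxx.
Qed.

Lemma kerP_mono r s : (forall x y, d x y <= r -> d x y <= s) ->
  (kerP d r <= kerP d s)%MS.
Proof.
move=> /rho0_factor [E hE]; apply/sub_kermxP.
by rewrite hE mulmxA mulmx_ker mul0mx.
Qed.

Lemma kerP_eq r s : (forall x y, (d x y <= r) = (d x y <= s)) ->
  kerP d r = kerP d s.
Proof.
move=> h; rewrite /kerP /rho0; congr kermx; apply/matrixP => i j; rewrite !mxE.
by rewrite /vr_conn (@eq_connect _ _ (vr_edge d s)) // => x y; rewrite /vr_edge h.
Qed.

End Graph.
Section Prev.
Variable R : realType.

Definition prevL (s : seq R) (b : R) : R := \big[Num.max/0]_(x <- s | x < b) x.

Lemma prevL_ge0 s b : 0 <= prevL s b.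
Proof.
rewrite /prevL; elim: s => [|x s IH]; first by rewrite big_nil.
rewrite big_cons; case: ifP => // _; by rewrite le_max IH orbT.
Qed.

Lemma prevL_ub s b x : x \in s -> x < b -> x <= prevL s b.
Proof.
rewrite /prevL; elim: s => [|y s IH] //; rewrite inE big_cons => /orP[/eqP->|xs] xb.
  by rewrite xb le_max lexx.
case: ifP => _; last exact: IH.
by rewrite le_max IH ?orbT.
Qed.

Lemma prevL_lt s b : 0 < b -> prevL s b < b.
Proof.
rewrite /prevL => b0; elim: s => [|y s IH]; first by rewrite big_nil.
by rewrite big_cons; case: ifP => // yb; rewrite gt_max yb IH.
Qed.

Lemma prevL_mem s b : prevL s b \in 0 :: s.
Proof.
rewrite /prevL; elim: s => [|y s IH]; first by rewrite big_nil mem_head.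
rewrite big_cons; case: ifP => _.
  rewrite /Num.max; case: ifP => _; last by rewrite !inE eqxx orbT.
  by move: IH; rewrite !inE => /orP[->|->]; rewrite ?orbT.
by move: IH; rewrite !inE => /orP[->|->]; rewrite ?orbT.
Qed.

Definition topL (s : seq R) : R := \big[Num.max/0]_(x <- s) x.

Lemma topL_ub s x : x \in s -> x <= topL s.
Proof.
rewrite /topL; elim: s => [|y s IH] //; rewrite inE big_cons => /orP[/eqP->|xs].
  by rewrite le_max lexx.
by rewrite le_max IH ?orbT.
Qed.

Lemma topL_ge0 s : 0 <= topL s.
Proof.
rewrite /topL; elim: s => [|x s IH]; first by rewrite big_nil.
by rewrite big_cons le_max IH orbT.
Qed.

Lemma topL_mem s : topL s \in 0 :: s.
Proof.
rewrite /topL; elim: s => [|y s IH]; first by rewrite big_nil mem_head.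
rewrite big_cons.
rewrite /Num.max; case: ifP => _; last by rewrite !inE eqxx orbT.
by move: IH; rewrite !inE => /orP[->|->]; rewrite ?orbT.
Qed.

Lemma tele (phi : R -> nat) (mono : forall x y, x <= y -> (phi x <= phi y)%N)
  (pr : R -> R) (s : seq R) (T : R) :
  uniq s -> (forall x, x \in s -> 0 < x) ->
  (forall b, b \in s -> [/\ pr b \in 0 :: s, pr b < b &
                            forall x, x \in s -> x < b -> x <= pr b]) ->
  T \in 0 :: s -> (forall x, x \in s -> x <= T) ->
  (\sum_(b <- s) (phi b - phi (pr b))%N)%R = (phi T - phi 0%R)%N.
Proof.
move Hk: (size s) => k; elim: k s T Hk => [|k IH] s T Hk us spos spr Ts Tub.
  move/size0nil: Hk => e; subst s; rewrite big_nil.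
  by move: Ts; rewrite inE => /eqP ->; rewrite subnn.
have sne : s != [::] by apply/eqP => e; rewrite e in Hk.
have Tin : T \in s.
  move: Ts; rewrite inE => /orP[/eqP T0|//].
  case: s sne spos Tub {Hk us spr} => [//|x s] _ spos Tub.
  have := spos x (mem_head _ _); have := Tub x (mem_head _ _).
  by rewrite T0 => h1 h2; move: (le_lt_trans h1 h2); rewrite ltxx.
rewrite (perm_big _ (perm_to_rem Tin)) big_cons.
have us' : uniq (rem T s) by rewrite rem_uniq.
have mr : forall x, x \in rem T s = (x != T) && (x \in s).
  by move=> x; rewrite (mem_rem_uniq _ us) inE.
have [prT prTl prTub] := spr T Tin.
rewrite (IH (rem T s) (pr T)).
- have h0 : (0 <= pr T)%R.
    move: prT; rewrite inE => /orP[/eqP->//|/spos/ltW//].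
  have m1 : (phi 0%R <= phi (pr T))%N := mono _ _ h0.
  have m2 := mono _ _ (ltW prTl).
  transitivity ((phi T - phi (pr T)) + (phi (pr T) - phi 0%R))%N; first by []. lia.
- by move: Hk; rewrite size_rem // => ->.
- done.
- by move=> x; rewrite mr => /andP[_ /spos].
- move=> b; rewrite mr => /andP[bT bs]; have [h1 h2 h3] := spr b bs; split => //.
  + move: h1; rewrite !inE mr => /orP[->//|->]; rewrite andbT orbC; apply/orP; left.
    apply/eqP => e; have := Tub b bs; rewrite -e => hb.
    by move: (lt_le_trans h2 hb); rewrite ltxx.
  + by move=> x; rewrite mr => /andP[_ /h3].
- move: prT; rewrite !inE mr => /orP[->//|->]; rewrite andbT orbC; apply/orP; left.
  by apply/eqP => e; move: prTl; rewrite e ltxx.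
- move=> x; rewrite mr => /andP[xT xs]; apply: prTub => //.
  by rewrite lt_neqAle xT Tub.
Qed.
End Prev.

Section Metric.
Variables (R : realType) (n : nat) (d : 'I_n -> 'I_n -> R).
Hypothesis md : is_metric d.

Let dsym : forall x y, d x y = d y x. Proof. by case: md. Qed.
Let d0 : forall x y, (d x y = 0) <-> (x = y). Proof. by case: md. Qed.
Let dge0 : forall x y, 0 <= d x y. Proof. by case: md. Qed.

Definition Dl : seq R := [seq d p.1 p.2 | p <- enum {: 'I_n * 'I_n}].
Lemma d_in_Dl x y : d x y \in Dl.
Proof. by apply: (map_f (fun p : 'I_n * 'I_n => d p.1 p.2) (x := (x, y))); rewrite mem_enum. Qed.

Lemma Dl_ge0 x : x \in Dl -> 0 <= x.
Proof. by case/mapP => p _ ->. Qed.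

Definition prv b := prevL Dl b.
Definition top := topL Dl.

Lemma d_le_prv x y b : d x y < b -> d x y <= prv b.
Proof. by apply: prevL_ub; apply: d_in_Dl. Qed.

Lemma kerM_sub b : 0 < b -> (kerM d b <= kerP d (prv b))%MS.
Proof.
move=> b0; apply/sumsmx_subP => v /asboolP [r [/andP[r0 rb] vr]].
rewrite genmxE; apply: (submx_trans vr); apply: kerP_mono => // x y hr.
by apply: d_le_prv; apply: le_lt_trans hr rb.
Qed.

Lemma kerP_sub_kerM b : 0 < b -> (kerP d (prv b) <= kerM d b)%MS.
Proof.
move=> b0; apply/row_subP => i; apply: (sumsmx_sup (row i (kerP d (prv b)))).
  apply/asboolP; exists (prv b); split; first by rewrite prevL_ge0 prevL_lt.
  exact: row_sub.
by rewrite genmxE.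
Qed.

Lemma kerM_kerP b : 0 < b -> (kerM d b <= kerP d b)%MS.
Proof.
move=> b0; apply: (submx_trans (kerM_sub b0)); apply: kerP_mono => // x y h.
exact: (le_trans h (ltW (prevL_lt _ b0))).
Qed.

Lemma kerP_jump b : 0 < b -> (forall x y, d x y != b) -> kerP d b = kerP d (prv b).
Proof.
move=> b0 hb; apply: kerP_eq => x y; apply/idP/idP => h.
  by apply: d_le_prv; rewrite lt_neqAle hb h.
exact: (le_trans h (ltW (prevL_lt _ b0))).
Qed.

Lemma kerP0 : kerP d 0 = 0.
Proof.
rewrite /kerP; have -> : rho0 d 0 = 1%:M.
  apply/matrixP => i j; rewrite !mxE; suff -> : vr_conn d 0 i j = (i == j) by [].
  apply/idP/eqP => [|->]; last exact: connect0.
  move/connectP => [p pth ->]; elim: p i pth => //= z p IH i /andP[hz /IH <-].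
  by apply/d0/le_anti; rewrite dge0 andbT; exact: hz.
by apply/eqP; rewrite kermx_eq0 row_free_unit unitmx1.
Qed.

Lemma top_ub x y : d x y <= top.
Proof. by apply: topL_ub; apply: d_in_Dl. Qed.

Lemma kerP_top : kerP d top = kermx (const_mx 1 : 'M['F_2]_n).
Proof.
rewrite /kerP; congr kermx; apply/matrixP => i j; rewrite !mxE.
by rewrite /vr_conn connect1 // /vr_edge top_ub.
Qed.

Definition supp := undup [seq x <- Dl | 0 < x].

Lemma mem_supp x : (x \in supp) = (x \in Dl) && (0 < x).
Proof. by rewrite mem_undup mem_filter andbC. Qed.

Lemma in0supp x : x \in 0 :: Dl -> x \in 0 :: supp.
Proof.
rewrite !inE mem_supp => /orP[->//|xD]; case: (x =P 0) => //= /eqP x0.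
by rewrite xD lt_neqAle eq_sym x0 Dl_ge0.
Qed.

Lemma vanish (h : 'M['F_2]_n -> nat)
  (hmono : forall X Y : 'M['F_2]_n, (X <= Y)%MS -> (h X <= h Y)%N) b :
  0 < b -> b \notin supp -> (h (kerP d b) - h (kerM d b))%N = 0%N.
Proof.
move=> b0 bs.
have -> : h (kerM d b) = h (kerP d (prv b)).
  by apply/eqP; rewrite eqn_leq !hmono ?kerM_sub ?kerP_sub_kerM.
rewrite kerP_jump ?subnn //.
move=> x y; apply/eqP => e; move: bs; rewrite mem_supp -e d_in_Dl e b0.
done.
Qed.

Lemma fsum_list (F : R -> nat) (HF0 : forall b, 0 < b -> b \notin supp -> F b = 0%N) :
  (\sum_(b \in [set b : R | 0 < b]) F b)%R = (\sum_(b <- supp) F b)%R.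
Proof.
rewrite (fsbigE supp).
- rewrite big_seq_cond (eq_bigl (fun b => b \in supp)); last first.
    move=> b; case bs: (b \in supp) => //=; apply/idP; rewrite in_setE /=.
    by move: bs; rewrite mem_supp => /andP[].
  by rewrite -big_seq.
- exact: undup_uniq.
- by move=> x /=; rewrite mem_supp => /andP[_ ?].
- by move=> b /= b0 bs; rewrite HF0.
Qed.

Lemma fsum_step (h : 'M['F_2]_n -> nat)
  (hmono : forall X Y : 'M['F_2]_n, (X <= Y)%MS -> (h X <= h Y)%N)
  (F : R -> nat) (HF : forall b, 0 < b -> F b = (h (kerP d b) - h (kerM d b))%N) :
  (\sum_(b \in [set b : R | 0 < b]) F b)%R = (h (kerP d top) - h 0%R)%N.
Proof.
have Hpr : forall b, 0 < b -> h (kerM d b) = h (kerP d (prv b)).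
  by move=> b b0; apply/eqP; rewrite eqn_leq !hmono ?kerM_sub ?kerP_sub_kerM.
rewrite fsum_list; last by move=> b b0 bs; rewrite HF // vanish.
  rewrite (eq_big_seq (fun b => (h (kerP d b) - h (kerP d (prv b)))%N)); last first.
    by move=> b; rewrite mem_supp => /andP[_ b0]; rewrite HF // Hpr.
  rewrite (@tele R (fun b => h (kerP d b)) _ prv supp top).
  + by rewrite kerP0.
  + by move=> x y xy; apply: hmono; apply: kerP_mono => // u v h1; apply: le_trans h1 xy.
  + exact: undup_uniq.
  + by move=> x; rewrite mem_supp => /andP[].
  + move=> b; rewrite mem_supp => /andP[_ b0]; split.
    * exact/in0supp/prevL_mem.
    * exact: prevL_lt.
    * by move=> x; rewrite mem_supp => /andP[xD _]; apply: prevL_ub.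
  + exact/in0supp/topL_mem.
  + by move=> x; rewrite mem_supp => /andP[xD _]; apply: topL_ub.
Qed.

Lemma mult_supp a : 0 < a -> a \notin supp -> mult d a = 0%N.
Proof. by move=> a0 aS; rewrite /mult (@vanish (fun X => \rank X)) // => X Y; apply: mxrankS. Qed.

End Metric.
Section Comb.
Local Open Scope nat_scope.
Variables (A B : eqType) (b0 : B) (SX : seq A) (SZ : seq B).
Variables (M : A -> B -> nat) (mA : A -> nat) (mB : B -> nat).
Hypotheses (uX : uniq SX) (uZ : uniq SZ).
Hypothesis H1 : forall a, a \in SX -> (\sum_(b <- SZ) M a b)%N = mA a.
Hypothesis H2 : forall b, b \in SZ -> (\sum_(a <- SX) M a b <= mB b)%N.

Definition tgt a := flatten [seq nseq (M a b) b | b <- SZ].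
Definition off a b := (\sum_(a' <- take (index a SX) SX) M a' b)%N.
Definition sigm (p : A * nat) : B * nat :=
  let t := tgt p.1 in let b := nth b0 t p.2.-1 in
  (b, off p.1 b + count (pred1 b) (take p.2 t)).

Lemma size_tgt a : size (tgt a) = (\sum_(b <- SZ) M a b)%N.
Proof.
rewrite /tgt size_flatten /shape -map_comp sumnE big_map.
by apply: eq_bigr => b _ /=; rewrite size_nseq.
Qed.

Lemma count_tgt a c : count (pred1 c) (tgt a) = if c \in SZ then M a c else 0.
Proof.
rewrite /tgt count_flatten -map_comp sumnE big_map.
under eq_bigr do rewrite /= count_nseq /=.
case: ifP => cS.
  rewrite (bigD1_seq c) //= eqxx mul1n big1 ?addn0 // => b /negbTE.
  by rewrite eq_sym => ->.
by rewrite big1_seq // => b /andP[_ bS]; case: eqP => // e; rewrite -e bS in cS.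
Qed.

Lemma mem_tgt a x : x \in tgt a -> (x \in SZ) && (0 < M a x).
Proof.
move/flattenP => [s /mapP [b bS ->]]; rewrite mem_nseq => /andP[h /eqP ->].
by rewrite bS h.
Qed.

Lemma sum_take_le (s : seq A) i (F : A -> nat) :
  (\sum_(x <- take i s) F x <= \sum_(x <- s) F x)%N.
Proof. by rewrite -{2}(cat_take_drop i s) big_cat leq_addr. Qed.

Lemma sum_take_mono (s : seq A) i j (F : A -> nat) : (i <= j)%N ->
  (\sum_(x <- take i s) F x <= \sum_(x <- take j s) F x)%N.
Proof. by move=> ij; rewrite -(take_takel s ij) sum_take_le. Qed.

Lemma count_take_mono (t : seq B) i j (P : pred B) : (i <= j)%N ->
  (count P (take i t) <= count P (take j t))%N.
Proof.
move=> ij; rewrite -(take_takel t ij) -{2}(cat_take_drop i (take j t)) count_cat.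
exact: leq_addr.
Qed.

Lemma count_take_le (t : seq B) i (P : pred B) : (count P (take i t) <= count P t)%N.
Proof. by rewrite -[X in (_ <= count _ X)%N](cat_take_drop i t) count_cat leq_addr. Qed.

Definition valid (p : A * nat) := [/\ p.1 \in SX, (1 <= p.2)%N & (p.2 <= mA p.1)%N].

Lemma valid_size p : valid p -> (p.2.-1 < size (tgt p.1))%N.
Proof. by case=> h1 h2 h3; rewrite size_tgt H1 //; lia. Qed.

Lemma count_take_nth (t : seq B) l : (l.-1 < size t)%N -> (1 <= l)%N ->
  count (pred1 (nth b0 t l.-1)) (take l t) =
  (count (pred1 (nth b0 t l.-1)) (take l.-1 t)).+1.
Proof.
move=> hl l1; have -> : l = l.-1.+1 by lia.
by rewrite (take_nth b0 hl) -cats1 count_cat /= eqxx addn1.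
Qed.

Lemma sig_mem p : valid p -> ((sigm p).1 \in SZ) && (0 < M p.1 (sigm p).1)%N.
Proof. by move=> v; apply: mem_tgt; apply: mem_nth; apply: valid_size. Qed.

Lemma sig_lb p : valid p -> (off p.1 (sigm p).1 < (sigm p).2)%N.
Proof.
move=> v; have := valid_size v; case: v => _ l1 _ hs.
by rewrite /sigm /= count_take_nth //; lia.
Qed.

Lemma off_next a b : a \in SX ->
  (off a b + M a b)%N = (\sum_(a' <- take (index a SX).+1 SX) M a' b)%N.
Proof.
move=> aS; rewrite (take_nth a); last by rewrite index_mem.
by rewrite -cats1 big_cat /= big_seq1 nth_index.
Qed.

Lemma sig_ub p : valid p ->
  ((sigm p).2 <= \sum_(a' <- take (index p.1 SX).+1 SX) M a' (sigm p).1)%N.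
Proof.
move=> v; rewrite -off_next; last by case: v.
rewrite /sigm /= leq_add2l.
have /andP[bS _] := sig_mem v.
have := count_tgt p.1 (nth b0 (tgt p.1) p.2.-1); rewrite bS => <-.
exact: count_take_le.
Qed.

Lemma sig_range p : valid p -> (1 <= (sigm p).2 <= mB (sigm p).1)%N.
Proof.
move=> v; have h1 := sig_lb v; have h2 := sig_ub v.
have h3 := sum_take_le SX (index p.1 SX).+1 (fun a' => M a' (sigm p).1).
have /andP[bS _] := sig_mem v.
have h4 := H2 bS.
apply/andP; split; lia.
Qed.

Lemma sig_inj p q : valid p -> valid q -> sigm p = sigm q -> p = q.
Proof.
wlog: p q / (index p.1 SX <= index q.1 SX)%N.
  move=> W vp vq e; case: (leqP (index p.1 SX) (index q.1 SX)) => h.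
    exact: W.
  by apply/esym; apply: W => //; lia.
move=> hi vp vq e.
case: (ltnP (index p.1 SX) (index q.1 SX)) => h.
  exfalso; have u1 := sig_ub vp; have l2 := sig_lb vq.
  have := sum_take_mono SX (fun a' => M a' (sigm p).1) h.
  rewrite /off in l2; rewrite e in u1 *; lia.
have ea : p.1 = q.1.
  apply: (@index_inj _ p.1 SX); [by case: vp|by case: vq|lia].
case: p q vp vq e {hi h} ea => a l [a' l'] /= vp vq e ea; subst a'.
congr (_, _).
have s1 := valid_size vp; have s2 := valid_size vq.
case: vp => _ l1 _; case: vq => _ l1' _.
rewrite /sigm /= in e s1 s2; case: e => eb e2.
rewrite -eb in e2; move/addnI: e2 => el.
set b := nth b0 (tgt a) l.-1 in eb el.
case: (ltngtP l l') => // hl.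
- have := count_take_mono (tgt a) (pred1 b) (_ : l <= l'.-1)%N.
  move=> /(_ ltac:(lia)) hc.
  have := count_take_nth s2 l1'; rewrite -eb => hc2; lia.
- have := count_take_mono (tgt a) (pred1 b) (_ : l' <= l.-1)%N.
  move=> /(_ ltac:(lia)) hc.
  have := count_take_nth s1 l1; rewrite -/b => hc2; lia.
Qed.

Lemma sig_count a c : a \in SX ->
  count (fun l => (sigm (a, l)).1 == c) (iota 1 (mA a)) =
  if c \in SZ then M a c else 0.
Proof.
move=> aS; rewrite -count_tgt -H1 // -size_tgt.
rewrite -[1%N]/(1 + 0)%N iotaDl count_map.
rewrite -{2}(mkseq_nth b0 (tgt a)) /mkseq count_map.
by apply: eq_count => l /=.
Qed.

End Comb.

Section Main.
Variables (R : realType) (n m : nat).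
Variables (dX : 'I_n -> 'I_n -> R) (dZ : 'I_m -> 'I_m -> R) (f : 'I_n -> 'I_m).
Hypotheses (mX : is_metric dX) (mZ : is_metric dZ) (finj : injective f).

Lemma f0_free : row_free (f0 f).
Proof.
apply/row_freeP; exists (f0 f)^T; apply/matrixP => i k; rewrite !mxE.
rewrite (bigD1 (f i)) //= big1 ?addr0.
  by rewrite !mxE eqxx mul1r (inj_eq finj) eq_sym.
by move=> j hj; rewrite !mxE eq_sym (negbTE hj) mul0r.
Qed.

Lemma rank_f0 p (A : 'M['F_2]_(p, n)) : \rank (A *m f0 f) = \rank A.
Proof. exact/mxrankMfree/f0_free. Qed.

Lemma rho0_top k (d : 'I_k -> 'I_k -> R) (md : is_metric d) : rho0 d (top d) = const_mx 1.
Proof.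
apply/matrixP => i j; rewrite !mxE.
by rewrite /vr_conn connect1 // /vr_edge top_ub.
Qed.

Lemma f0_top a : (kerP dX a <= kerP dX (top dX))%MS ->
  (kerP dX a *m f0 f <= kerP dZ (top dZ))%MS.
Proof.
move=> /sub_kermxP H; apply/sub_kermxP.
rewrite (rho0_top mX) in H; rewrite (rho0_top mZ) -mulmxA.
have -> : f0 f *m const_mx 1 = const_mx 1 :> 'M['F_2]_(n, m).
  apply/matrixP => l j; rewrite !mxE (bigD1 (f l)) //= big1 ?addr0.
    by rewrite !mxE eqxx mul1r.
  by move=> k hk; rewrite !mxE eq_sym (negbTE hk) mul0r.
apply/matrixP => i j; have := congr1 (fun M : 'M['F_2]_n => M i i) H.
rewrite !mxE => h; apply: (etrans _ h); apply: eq_bigr => k _; by rewrite !mxE.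
Qed.

Let dsymX : forall x y, dX x y = dX y x. Proof. by case: mX. Qed.

Lemma part1 a : 0 < a ->
  (\sum_(b \in [set b : R | 0 < b]) Mf dX dZ f a b)%R = mult dX a.
Proof.
move=> a0.
set W := (kerP dX a *m f0 f).
set W' := (kerM dX a *m f0 f).
have sW : (W' <= W)%MS := submxMr _ (kerM_kerP mX a0).
have Wtop : (W <= kerP dZ (top dZ))%MS.
  apply: f0_top; apply: kerP_mono => // x y h; exact: top_ub.
rewrite (@fsum_step R m dZ mZ (fun X => \rank (W :&: X + W')%MS)).
- have e1 : \rank (W :&: kerP dZ (top dZ) + W')%MS = \rank W.
    apply: rank_sub_eq; first by rewrite addsmx_sub capmxSl sW.
    apply: submx_trans (addsmxSl _ _); by rewrite sub_capmx submx_refl Wtop.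
  have e2 : \rank (W :&: (0 : 'M['F_2]_m) + W')%MS = \rank W'.
    apply: rank_sub_eq; last exact: addsmxSr.
    by rewrite addsmx_sub submx_refl andbT (submx_trans (capmxSr _ _)) ?sub0mx.
  by rewrite e1 e2 /W /W' !rank_f0.
- by move=> X Y h; apply: mxrankS; apply: addsmxS => //; apply: capmxS.
- by move=> b b0; rewrite /Mf (lemL sW (kerM_kerP mZ b0)).1.
Qed.

Lemma part2 b : 0 < b ->
  ((\sum_(a \in [set a : R | 0 < a]) Mf dX dZ f a b)%R <= mult dZ b)%N.
Proof.
move=> b0.
set K := kerP dZ b. set K' := kerM dZ b.
have sK : (K' <= K)%MS := kerM_kerP mZ b0.
rewrite (@fsum_step R n dX mX (fun Y => \rank ((Y *m f0 f) :&: K + K')%MS)).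
- have e1 : (\rank ((kerP dX (top dX) *m f0 f) :&: K + K')%MS <= \rank K)%N.
    by apply: mxrankS; rewrite addsmx_sub capmxSr sK.
  have e2 : \rank (((0 : 'M['F_2]_n) *m f0 f) :&: K + K')%MS = \rank K'.
    apply: rank_sub_eq; last exact: addsmxSr.
    by rewrite addsmx_sub submx_refl andbT mul0mx (submx_trans (capmxSl _ _)) ?sub0mx.
  rewrite e2 /mult -/K -/K'; lia.
- move=> X Y h; apply: mxrankS; apply: addsmxS => //; apply: capmxS => //.
  exact: submxMr.
- by move=> a a0; rewrite /Mf (lemL (submxMr (f0 f) (kerM_kerP mX a0)) sK).2.
Qed.



Lemma Mf_vanish_b a b : 0 < a -> 0 < b -> b \notin supp dZ -> Mf dX dZ f a b = 0%N.
Proof.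
move=> a0 b0 bs.
set W := (kerP dX a *m f0 f).
set W' := (kerM dX a *m f0 f).
have sW : (W' <= W)%MS := submxMr _ (kerM_kerP mX a0).
rewrite /Mf (lemL sW (kerM_kerP mZ b0)).1.
apply: (@vanish R m dZ mZ (fun X => \rank (W :&: X + W')%MS)) => //.
by move=> X Y h; apply: mxrankS; apply: addsmxS => //; apply: capmxS.
Qed.

Lemma Mf_vanish_a a b : 0 < a -> 0 < b -> a \notin supp dX -> Mf dX dZ f a b = 0%N.
Proof.
move=> a0 b0 aS.
set K := kerP dZ b. set K' := kerM dZ b.
have sK : (K' <= K)%MS := kerM_kerP mZ b0.
rewrite /Mf (lemL (submxMr (f0 f) (kerM_kerP mX a0)) sK).2.
apply: (@vanish R n dX mX (fun Y => \rank ((Y *m f0 f) :&: K + K')%MS)) => //.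
move=> X Y h; apply: mxrankS; apply: addsmxS => //; apply: capmxS => //.
exact: submxMr.
Qed.

Lemma supp_pos k (d : 'I_k -> 'I_k -> R) x : x \in supp d -> 0 < x.
Proof. by rewrite mem_supp => /andP[]. Qed.

Lemma sum1 a : 0 < a -> (\sum_(b <- supp dZ) Mf dX dZ f a b)%N = mult dX a.
Proof.
move=> a0; rewrite -(part1 a0) (@fsum_list R m dZ) //.
by move=> b b0 bs; apply: Mf_vanish_b.
Qed.

Lemma sum2 b : 0 < b -> (\sum_(a <- supp dX) Mf dX dZ f a b <= mult dZ b)%N.
Proof.
move=> b0; have := part2 b0; rewrite (@fsum_list R n dX) //.
by move=> a a0 aS; apply: Mf_vanish_a.
Qed.

End Main.

Local Open Scope classical_set_scope.
Local Open Scope ring_scope.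

Theorem proposition4p5 (R : realType) (n m : nat)
    (dX : 'I_n -> 'I_n -> R) (dZ : 'I_m -> 'I_m -> R) (f : 'I_n -> 'I_m) :
  is_metric dX -> is_metric dZ -> injective f ->
  [/\ (forall a, a \in bar_support dX ->
         (\sum_(b \in [set b : R | 0 < b]) Mf dX dZ f a b)%R = mult dX a),
      (forall b, b \in bar_support dZ ->
         ((\sum_(a \in [set a : R | 0 < a]) Mf dX dZ f a b)%R <= mult dZ b)%N) &
      exists sigma : R * nat -> R * nat,
        [/\ {in Rep dX &, injective sigma},
            (forall p, p \in Rep dX -> sigma p \in Rep dZ) &
            forall a b, a \in bar_support dX -> 0 < b ->
              count (fun l => (sigma (a, l)).1 == b) (iota 1 (mult dX a))
              = Mf dX dZ f a b]].
Proof.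
move=> mX mZ finj.
have uX : uniq (supp dX) := undup_uniq _.
have uZ : uniq (supp dZ) := undup_uniq _.
have H1 : forall a, a \in supp dX ->
    (\sum_(b <- supp dZ) Mf dX dZ f a b)%N = mult dX a.
  by move=> a /supp_pos a0; apply: sum1.
have H2 : forall b, b \in supp dZ ->
    (\sum_(a <- supp dX) Mf dX dZ f a b <= mult dZ b)%N.
  by move=> b /supp_pos b0; apply: sum2.
have bsX : forall a, a \in bar_support dX -> 0 < a /\ a \in supp dX.
  move=> a; rewrite in_setE => -[a0 ma]; split => //.
  apply/negPn/negP => aS; move: ma; by rewrite (mult_supp mX a0 aS).
have RepV : forall p, p \in Rep dX -> valid (supp dX) (mult dX) p.
  move=> p; rewrite in_setE => -[/bsX [_ pS] /andP[h1 h2]]; by split.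
split.
- by move=> a /bsX [a0 _]; apply: part1.
- by move=> b; rewrite in_setE => -[b0 _]; apply: part2.
exists (sigm 0 (supp dX) (supp dZ) (Mf dX dZ f)); split.
- move=> p q /RepV vp /RepV vq e.
  exact: (sig_inj uX uZ H1 vp vq e).
- move=> p /RepV vp.
  have /andP[bS _] := sig_mem 0 uX uZ H1 vp.
  have /andP[k1 k2] := sig_range 0 uX uZ H1 H2 vp.
  rewrite in_setE /=; split; last by rewrite k1 k2.
  rewrite in_setE /=; split; first exact: supp_pos bS.
  exact: leq_trans k1 k2.
- move=> a b /bsX [a0 aS] b0.
  rewrite (sig_count 0 uZ H1 b aS).
  case: ifP => // bS; apply/esym/Mf_vanish_b => //; by rewrite bS.
Qed.
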